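(* Let $B$ be a Borel ideal of $S=k[x_1,\dots,x_n]$ and let $m$ be a monomial which is a $p$-socle for $B$. Assume that for every variable $x_q$ dividing $m$, neither $m\frac{x_{q+1}}{x_q}$ (when $q<n$) nor $\frac{m}{x_q}$ is a $p$-socle for $B$. Then $mx_p\in\mathrm{Bgens}(B)$.
   Context: A Borel ideal is a monomial ideal closed under Borel moves $m\mapsto m\frac{x_{i_1}}{x_{j_1}}\cdots\frac{x_{i_s}}{x_{j_s}}$ ($i_t<j_t$, all $x_{j_t}\mid m$). $\mathrm{Bgens}(B)$ is the unique minimal set $T$ of monomials with $B$ equal to the smallest Borel ideal containing $T$. A monomial $m$ is a $p$-socle for $B$ if $\operatorname{Ann}_{S/B}(m)=(B:m)=(x_1,\dots,x_p)$. *)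

(* Defs.v *)
(* Monomials of S = k[x_1..x_n] are exponent vectors
   'I_n -> nat; variable x_(i+1) of the paper is index i : 'I_n (0-based).
   A monomial ideal is represented by the set (predicate) of monomials it
   contains; the field k plays no role. *)
From mathcomp Require Import all_boot.
Set Implicit Arguments. Unset Strict Implicit. Unset Printing Implicit Defensive.

Definition monomial (n : nat) := {ffun 'I_n -> nat}.

Definition mmul n (a b : monomial n) : monomial n := [ffun i => a i + b i].

Definition mvar n (i : 'I_n) : monomial n := [ffun k => nat_of_bool (k == i)].

Definition is_mideal n (B : monomial n -> Prop) : Prop :=
  forall a b, B a -> B (mmul a b).

Definition borel_move n (m m' : monomial n) : Prop :=
  exists i j : 'I_n, i < j /\ 0 < m j /\
    m' = [ffun k => m k + (k == i) - (k == j)].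

Definition is_borel n (B : monomial n -> Prop) : Prop :=
  is_mideal B /\ forall m m', B m -> borel_move m m' -> B m'.

Definition borel_closure n (T : monomial n -> Prop) : monomial n -> Prop :=
  fun u => forall I, is_borel I -> (forall t, T t -> I t) -> I u.

Definition same_set n (A B : monomial n -> Prop) : Prop := forall u, A u <-> B u.

Definition is_Bgens n (B T : monomial n -> Prop) : Prop :=
  same_set B (borel_closure T) /\
  forall T', (forall u, T' u -> T u) -> same_set B (borel_closure T') ->
             forall u, T u -> T' u.

(* m is a p-socle for B: (B : m) = (x_1, ..., x_p), p 0-based here *)
Definition is_psocle n (B : monomial n -> Prop) (m : monomial n) (p : 'I_n) : Prop :=
  forall u, B (mmul u m) <-> exists i : 'I_n, i <= p /\ 0 < u i.

Definition shift_up n (m : monomial n) (q : 'I_n) : monomial n :=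
  [ffun k : 'I_n => m k + (nat_of_ord k == q.+1) - (k == q)].

Definition mdivvar n (m : monomial n) (q : 'I_n) : monomial n :=
  [ffun k => m k - (k == q)].

(* Main.v *)
Require Import Defs.
From mathcomp Require Import all_boot.
From Stdlib Require Import Lia Classical Wf_nat.
Set Implicit Arguments. Unset Strict Implicit. Unset Printing Implicit Defensive.

Ltac gen_atoms := repeat match goal with
 | |- context [ @fun_of_fin ?A ?B ?P ?f ?x ] => let a := fresh "a" in
      set a := @fun_of_fin A B P f x in *; clearbody a
 end.

Ltac tolia := intros; repeat match goal with
 | H : is_true (_ <= _) |- _ => move/leP in H
 | H : is_true (_ < _) |- _ => move/ltP in H
 | |- is_true (_ <= _) => apply/leP
 | |- is_true (_ < _) => apply/ltP
 end; unfold addn, subn, addn_rec, subn_rec in *; lia.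

Ltac prep := repeat match goal with
  | H : is_true (?a != ?b) |- _ => move/eqP in H
  end.
Ltac splits := repeat (match goal with
  | |- context [ ?x == ?y ] => let E := fresh "E" in
     case: (boolP (x == y)) => E;
       [ rewrite ?E; move/eqP in E; try subst | rewrite ?(negbTE E); move/eqP in E ]
  end; rewrite /=).
Ltac ordneq := repeat match goal with
  | Hq : ~ (@eq ?T ?a ?b) |- _ =>
     let T' := eval hnf in T in
     match T' with ordinal _ =>
     let Hn := fresh "Hn" in
     (have Hn : nat_of_ord a <> nat_of_ord b by (let HH := fresh "HH" in move=> HH; apply: Hq; exact: (ord_inj HH)));
     clear Hq end
  | Hq : @eq ?T ?a ?b |- _ =>
     let T' := eval hnf in T in
     match T' with ordinal _ =>
     let Hn := fresh "Hn" in
     (have Hn : nat_of_ord a = nat_of_ord b by exact: (congr1 (@nat_of_ord _) Hq));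
     clear Hq end
  end.
Ltac solve_pt := prep; splits; try done; try congruence; ordneq; cbn [nat_of_ord] in *; tolia.

Lemma ffeq n (a b : monomial n) k : a = b -> a k = b k.
Proof. by move->. Qed.

Ltac pw := apply/ffunP => k; rewrite !ffunE /=; solve_pt.

Definition step n (w v : monomial n) : Prop :=
  (exists i, v = mmul w (mvar i)) \/ borel_move w v.

Inductive reach n (w : monomial n) : monomial n -> Prop :=
 | rrefl : reach w w
 | rstep v x : reach w v -> step v x -> reach w x.

Lemma borel_step n (I : monomial n -> Prop) v x : is_borel I -> I v -> step v x -> I x.
Proof. move=> [Hi Hb] Hv [[i ->]|Hm]; [exact: Hi | exact: Hb Hm]. Qed.

Lemma borel_reach n (I : monomial n -> Prop) (w v : monomial n) :
  is_borel I -> I w -> reach w v -> I v.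
Proof. move=> HI Hw; elim=> // y x _ IH Hs; exact: borel_step HI IH Hs. Qed.

Lemma reach_trans n (a b c : monomial n) : reach a b -> reach b c -> reach a c.
Proof. move=> Hab; elim=> // y x _ IH Hs; exact: rstep IH Hs. Qed.

Lemma sumD1 n (a : monomial n) (c : 'I_n -> nat) j :
  \sum_(k < n) (a k + (k == j)) * c k = \sum_(k < n) a k * c k + c j.
Proof.
  rewrite (eq_bigr (fun k => a k * c k + (k == j) * c k)); last by move=> k _; rewrite mulnDl.
  rewrite big_split /=; congr (_ + _).
  rewrite (bigD1 j) //= eqxx mul1n big1 ?addn0 // => k /negbTE ->; by rewrite mul0n.
Qed.

Lemma reach_mul n (a b : monomial n) : reach a (mmul a b).
Proof.
  move: {2}(\sum_(k < n) b k) (erefl (\sum_(k<n) b k)) => s.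
  elim: s b => [|s IH] b Hs.
  - have -> : mmul a b = a; last exact: rrefl.
    apply/ffunP=> k; rewrite ffunE.
    have := Hs; rewrite (bigD1 k) //=; move/eqP; rewrite addn_eq0 => /andP[/eqP -> _].
    by rewrite addn0.
  - case: (pickP (fun i => 0 < b i)) => [i Hi | H0]; last first.
      move: Hs; rewrite big1 // => k _; move: (H0 k) => /=; by case: (b k).
    set b' : monomial n := [ffun k => b k - (k == i)].
    have Hb' : \sum_(k < n) b' k = s.
      have := sumD1 b' (fun _ => 1) i.
      have -> : \sum_(k < n) (b' k + (k == i)) * 1 = \sum_(k < n) b k.
        apply: eq_bigr => k _; rewrite muln1 /b' ffunE; solve_pt.
      rewrite Hs (eq_bigr (fun k => b' k)) => [|k _]; last by rewrite muln1.
      by rewrite addn1 => -[].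
    apply: rstep (IH b' Hb') _; left; exists i.
    rewrite /b'; pw.
Qed.

Lemma reachset_borel n (T : monomial n -> Prop) :
  is_borel (fun u => exists t, T t /\ reach t u).
Proof.
  split.
  - move=> a b [t [Tt R]]; exists t; split => //; exact: reach_trans R (reach_mul a b).
  - move=> a a' [t [Tt R]] Hm; exists t; split => //; apply: rstep R _; by right.
Qed.

Lemma closure_reach n (T : monomial n -> Prop) u :
  borel_closure T u -> exists t, T t /\ reach t u.
Proof.
  move=> H; apply: (H (fun u => exists t, T t /\ reach t u)); first exact: reachset_borel.
  move=> t Tt; exists t; split => //; exact: rrefl.
Qed.

Definition phi n (u : monomial n) := \sum_(k < n) u k * (n - k).

Lemma phi_mvar n (u : monomial n) i : phi (mmul u (mvar i)) = phi u + (n - i).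
Proof. rewrite /phi -(sumD1 u (fun k : 'I_n => n - k)); apply: eq_bigr => k _; by rewrite !ffunE. Qed.

Lemma step_phi n (v x : monomial n) : step v x -> phi v < phi x.
Proof.
  case=> [[i ->]|[i [j [Hij [Hvj ->]]]]].
  - rewrite phi_mvar; move: (ltn_ord i) => Hi; tolia.
  - set x0 := [ffun k => _].
    have E : mmul x0 (mvar j) = mmul v (mvar i) by rewrite /x0; pw.
    move: (congr1 (@phi n) E); rewrite !phi_mvar => Ep.
    move: (ltn_ord j) => Hj; tolia.
Qed.

Lemma reach_phi n (w v : monomial n) : reach w v -> w = v \/ phi w < phi v.
Proof.
  elim=> [|y x _ [<-|IH] S]; first by left.
  - right; exact: step_phi.
  - right; exact: ltn_trans IH (step_phi S).
Qed.

Lemma reach_last n (w v : monomial n) : reach w v -> w = v \/ exists y, reach w y /\ step y v.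
Proof. case=> [|y x R S]; [by left | right; by exists y]. Qed.

Definition minimal n (B : monomial n -> Prop) t :=
  B t /\ forall w, B w -> reach w t -> w = t.

Lemma exists_min n (B : monomial n -> Prop) : is_borel B ->
  forall u, B u -> exists t, minimal B t /\ reach t u.
Proof.
  move=> HB u; have Hwf := well_founded_ltof _ (@phi n).
  elim/(well_founded_ind Hwf): u => u IH Bu.
  case: (classic (forall w, B w -> reach w u -> w = u)) => [H|H].
    by exists u; split; [split | exact: rrefl].
  apply not_all_ex_not in H as [w Hw].
  case: (classic (B w /\ reach w u /\ w <> u)) => [[Bw [Rw Nw]] | C]; last first.
    exfalso; apply Hw => Bw Rw; apply: NNPP => Nw; apply C; tauto.
  case: (reach_phi Rw) => // Hlt.
  have [t [Mt Rt]] := IH w (ltac:(rewrite /ltof; apply/ltP; exact Hlt)) Bw.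
  exists t; split => //; exact: reach_trans Rt Rw.
Qed.

Lemma mmulC n (a b : monomial n) : mmul a b = mmul b a.
Proof. apply/ffunP => k; by rewrite !ffunE addnC. Qed.

Lemma BmulvarE n (B : monomial n -> Prop) m p k :
  is_psocle B m p -> B (mmul m (mvar k)) <-> k <= p.
Proof.
  move=> HS; rewrite mmulC HS; split.
  - move=> [i [Hi Hk]]; move: Hk; rewrite ffunE; case: eqP => // E _; by rewrite -E.
  - move=> Hk; exists k; by rewrite ffunE eqxx.
Qed.

Lemma notBm n (B : monomial n -> Prop) m p : is_psocle B m p -> ~ B m.
Proof.
  move=> HS Bm.
  have : B (mmul [ffun=> 0] m) by have -> : mmul [ffun => 0] m = m by pw.
  move/HS => [i [_]]; by rewrite ffunE.
Qed.

Lemma socle_up n (B : monomial n -> Prop) (m' : monomial n) (p : 'I_n) :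
  is_borel B -> B (mmul m' (mvar p)) ->
  forall u : monomial n, (exists i : 'I_n, i <= p /\ 0 < u i) -> B (mmul u m').
Proof.
  move=> HB BM u [j [Hj Hu]].
  have Bj : B (mmul m' (mvar j)).
    case: (eqVneq j p) => [->//|Hjp].
    apply: (HB.2 _ _ BM); exists j, p; split; [|split].
    - have Hn : (nat_of_ord j) <> p by move=> /val_inj E; move: Hjp; rewrite E eqxx.
      tolia.
    - rewrite !ffunE eqxx /=; tolia.
    - pw.
  have -> : mmul u m' = mmul (mmul m' (mvar j)) [ffun k => u k - (k == j)] by pw.
  exact: HB.1.
Qed.

Lemma no_step n (B : monomial n -> Prop) (m : monomial n) (p : 'I_n) y :
  is_borel B -> is_psocle B m p ->
  (forall q : 'I_n, 0 < m q ->
     (q.+1 < n -> ~ is_psocle B (shift_up m q) p) /\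
     ~ is_psocle B (mdivvar m q) p) ->
  B y -> step y (mmul m (mvar p)) -> False.
Proof.
  move=> HB HS HN By [[i Ei] | [i [j [Hij [Hyj Ej]]]]].
  - case: (eqVneq i p) => [Eip | Hip].
    + subst i; apply: (notBm HS).
      have -> : m = y; last exact By.
      apply/ffunP => k; move: (ffeq k Ei); rewrite !ffunE; solve_pt.
    + have Hmi : 0 < m i by move: (ffeq i Ei); rewrite !ffunE; solve_pt.
      apply: (HN i Hmi).2 => u; split.
      * move=> Bu; apply/HS.
        have -> : mmul u m = mmul (mmul u (mdivvar m i)) (mvar i) by pw.
        exact: HB.1.
      * apply: socle_up HB _ u.
        have -> : mmul (mdivvar m i) (mvar p) = y; last exact By.
        apply/ffunP => k; move: (ffeq k Ei); rewrite !ffunE; solve_pt.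
  - case: (eqVneq i p) => [Eip | Hip].
    + subst i.
      have : B (mmul m (mvar j)).
        have -> : mmul m (mvar j) = y; last exact By.
        apply/ffunP => k; move: (ffeq k Ej); rewrite !ffunE; solve_pt.
      move/(BmulvarE _ HS); tolia.
    + have Hmi : 0 < m i by move: (ffeq i Ej); rewrite !ffunE; solve_pt.
      have Hin : i.+1 < n by apply: leq_ltn_trans Hij (ltn_ord j).
      move: ((HN i Hmi).1 Hin); apply.
      have BM' : B (mmul (shift_up m i) (mvar p)).
        case: (eqVneq (nat_of_ord j) i.+1) => [Ej1 | Hj1].
        * have -> : mmul (shift_up m i) (mvar p) = y; last exact By.
          apply/ffunP => k; move: (ffeq k Ej); rewrite !ffunE; solve_pt.
        * apply: (HB.2 _ _ By); exists (Ordinal Hin), j; split; [|split] => //=.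
          - move/eqP: Hj1; tolia.
          - apply/ffunP => k; move: (ffeq k Ej); rewrite !ffunE; solve_pt.
      move=> u; split.
      * move=> Bu; apply/HS.
        apply: (HB.2 _ _ Bu); exists i, (Ordinal Hin); split; [|split] => //=.
        - rewrite !ffunE /=; solve_pt.
        - pw.
      * exact: socle_up HB BM' u.
Qed.

Theorem lemma3p5 (n : nat) (B : monomial n -> Prop) (m : monomial n) (p : 'I_n) :
  is_borel B ->
  is_psocle B m p ->
  (forall q : 'I_n, 0 < m q ->
     (q.+1 < n -> ~ is_psocle B (shift_up m q) p) /\
     ~ is_psocle B (mdivvar m q) p) ->
  (exists T, is_Bgens B T) /\
  (forall T, is_Bgens B T -> T (mmul m (mvar p))).
Proof.
  move=> HB HS HN; split.
  - exists (minimal B); split.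
    + move=> u; split.
      * move=> Bu I HI HT.
        have [t [Mt Rt]] := exists_min HB Bu.
        exact: borel_reach HI (HT t Mt) Rt.
      * move=> H; apply: (H B HB) => t [Bt _]; exact Bt.
    + move=> T' HT' HS' u [Bu Mu].
      have [t [Tt Rt]] := closure_reach ((HS' u).1 Bu).
      have [Bt _] := HT' t Tt.
      by rewrite -(Mu t Bt Rt).
  - move=> T [HST _].
    have BM : B (mmul m (mvar p)) by apply/(BmulvarE _ HS).
    have [t [Tt Rt]] := closure_reach ((HST _).1 BM).
    have Bt : B t by apply/(HST t) => I _ HI; exact: HI.
    case: (reach_last Rt) => [<- // | [y [Ry Sy]]].
    exfalso; exact: no_step HB HS HN (borel_reach HB Bt Ry) Sy.
Qed.
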